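(* Consider the system $\frac{d\boldsymbol{x}}{dt}=\mathbf{A}\boldsymbol{x}+\mathbf{B}_p\boldsymbol{p}+\mathbf{B}_d\boldsymbol{d}$ on $\mathcal{T}=[0,t_f]$, with $\boldsymbol{x}\in\mathbb{R}^{N_x}$, $\boldsymbol{p}\in\mathbb{R}^{N_p}_+$, $\mathbf{A}$ having non-positive diagonal and non-negative off-diagonal entries, $\mathbf{B}_p\ge 0$ entrywise, given $\boldsymbol{d}$ and $\boldsymbol{x}_0$, power bounds $\boldsymbol{0}\le\boldsymbol{p}_{\min}\le\boldsymbol{p}_{\max}$ and state bounds $\boldsymbol{x}_{\min}\le\boldsymbol{x}_{\max}$. Let $\boldsymbol{\delta}:\mathcal{T}\to\mathbb{R}^{N_p}$ be a fixed dispatch plan with $\delta_j(t)\ge0$ and $\sum_{j}\delta_j(t)=1$ for all $t$; a total power trajectory $p_{\mathrm{tot}}\ge 0$ is dispatched as $p_j(t)=\delta_j(t)p_{\mathrm{tot}}(t)$. Define for $i=1,\dots,N_x$ $$\gamma_{+,i}(t)=\max_{0\le\tau\le t}\sum_{j}\big(e^{\mathbf{A}(t-\tau)}\mathbf{B}_p\big)_{i,j}\delta_j(\tau),\qquad \gamma_{-,i}(t)=\min_{0\le\tau\le t}\sum_{j}\big(e^{\mathbf{A}(t-\tau)}\mathbf{B}_p\big)_{i,j}\delta_j(\tau),$$ and assume $\gamma_{\pm,i}(t)>0$ for all $i$ and $t\in\mathcal{T}$. Let $\boldsymbol{p}_+$ and $\boldsymbol{p}_-$ be feasible power trajectories dispatched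 according to $\boldsymbol{\delta}$ (i.e. $\boldsymbol{p}_\pm=\boldsymbol{\delta}p_{\pm,\mathrm{tot}}$ with $p_{\pm,\mathrm{tot}}\ge 0$, satisfying the power bounds and, with the same $\boldsymbol{x}_0,\boldsymbol{d}$, the state bounds for all $t$), and define $$\mathrm{E}^{\mathrm{TI,c}}_{\mathrm{up}}(t)=\min_{i}\frac{1}{\gamma_{+,i}(t)}\Big(\int_0^t e^{\mathbf{A}(t-\tau)}\mathbf{B}_p\boldsymbol{p}_+(\tau)\,d\tau\Big)_i,\qquad \mathrm{E}^{\mathrm{TI,c}}_{\mathrm{down}}(t)=\max_{i}\frac{1}{\gamma_{-,i}(t)}\Big(\int_0^t e^{\mathbf{A}(t-\tau)}\mathbf{B}_p\boldsymbol{p}_-(\tau)\,d\tau\Big)_i.$$ If a total power trajectory $p_{a,\mathrm{tot}}\ge0$, dispatched as $\boldsymbol{p}_a=\boldsymbol{\delta}p_{a,\mathrm{tot}}$, satisfies $\boldsymbol{p}_{\min}\le\boldsymbol{p}_a(t)\le\boldsymbol{p}_{\max}$ and $\mathrm{E}^{\mathrm{TI,c}}_{\mathrm{down}}(t)\le\int_0^t p_{a,\mathrm{tot}}(\tau)\,d\tau\le\mathrm{E}^{\mathrm{TI,c}}_{\mathrm{up}}(t)$ for all $t\in\mathcal{T}$, then the resulting state $\boldsymbol{x}_a$ (same $\boldsymbol{x}_0,\boldsymbol{d}$) satisfies $\boldsymbol{x}_{\min}\le\boldsymbol{x}_a(t)\le\boldsymbol{x}_{\max}$ for all $t\in\ma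thcal{T}$.
   Context: Vector inequalities and integrals are componentwise. States are given by $\boldsymbol{x}(t)=e^{\mathbf{A}t}\boldsymbol{x}_0+\int_0^t e^{\mathbf{A}(t-\tau)}(\mathbf{B}_d\boldsymbol{d}(\tau)+\mathbf{B}_p\boldsymbol{p}(\tau))\,d\tau$. This is the ''centralized'' setting in which all inputs are managed as one pool receiving a total power request $p_{\mathrm{tot}}$. *)

(* Defs.v *)
From HB Require Import structures.
From mathcomp Require Import all_boot all_order all_algebra.
From mathcomp Require Import all_classical all_reals all_analysis.
Set Implicit Arguments. Unset Strict Implicit. Unset Printing Implicit Defensive.
Import Order.TTheory GRing.Theory Num.Theory.
Import numFieldNormedType.Exports.
Local Open Scope classical_set_scope.
Local Open Scope ring_scope.

Definition expmx {R : realType} (n : nat) (A : 'M[R]_n) : 'M[R]_n :=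
  \matrix_(i, j) limn (fun n => \sum_(k < n) ((A ^+ k) i j / (k`!)%:R)).

Definition Phi {R : realType} (n : nat) (A : 'M[R]_n) (s : R) : 'M[R]_n :=
  expmx (s *: A).

Definition int0 {R : realType} (f : R -> R) (t : R) : R :=
  Rintegral lebesgue_measure `[0, t] f.

Definition state {R : realType} (Nx Nd Np : nat) (A : 'M[R]_Nx)
  (Bd : 'M[R]_(Nx, Nd)) (Bp : 'M[R]_(Nx, Np)) (x0 : 'cV[R]_Nx)
  (d : R -> 'cV[R]_Nd) (p : R -> 'cV[R]_Np) (t : R) (i : 'I_Nx) : R :=
  (Phi A t *m x0) i 0 +
  int0 (fun tau => (Phi A (t - tau) *m (Bd *m d tau + Bp *m p tau)) i 0) t.

Definition dispatch {R : realType} (Np : nat) (delta : R -> 'cV[R]_Np)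
  (ptot : R -> R) : R -> 'cV[R]_Np := fun t => ptot t *: delta t.

Definition gdisp {R : realType} (Nx Np : nat) (A : 'M[R]_Nx)
  (Bp : 'M[R]_(Nx, Np)) (delta : R -> 'cV[R]_Np) (t tau : R) (i : 'I_Nx) : R :=
  \sum_j (Phi A (t - tau) *m Bp) i j * delta tau j 0.

Definition gamma_plus {R : realType} (Nx Np : nat) (A : 'M[R]_Nx)
  (Bp : 'M[R]_(Nx, Np)) (delta : R -> 'cV[R]_Np) (t : R) (i : 'I_Nx) : R :=
  sup [set gdisp A Bp delta t tau i | tau in `[0, t]].
Definition gamma_minus {R : realType} (Nx Np : nat) (A : 'M[R]_Nx)
  (Bp : 'M[R]_(Nx, Np)) (delta : R -> 'cV[R]_Np) (t : R) (i : 'I_Nx) : R :=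
  inf [set gdisp A Bp delta t tau i | tau in `[0, t]].

Definition pow_resp {R : realType} (Nx Np : nat) (A : 'M[R]_Nx)
  (Bp : 'M[R]_(Nx, Np)) (p : R -> 'cV[R]_Np) (t : R) (i : 'I_Nx) : R :=
  int0 (fun tau => (Phi A (t - tau) *m Bp *m p tau) i 0) t.

Definition E_up {R : realType} (Nx Np : nat) (A : 'M[R]_Nx)
  (Bp : 'M[R]_(Nx, Np)) (delta : R -> 'cV[R]_Np) (pplus : R -> 'cV[R]_Np)
  (t : R) : R :=
  inf [set (gamma_plus A Bp delta t i)^-1 * pow_resp A Bp pplus t i
      | i in [set: 'I_Nx]].
Definition E_down {R : realType} (Nx Np : nat) (A : 'M[R]_Nx)
  (Bp : 'M[R]_(Nx, Np)) (delta : R -> 'cV[R]_Np) (pminus : R -> 'cV[R]_Np)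
  (t : R) : R :=
  sup [set (gamma_minus A Bp delta t i)^-1 * pow_resp A Bp pminus t i
      | i in [set: 'I_Nx]].

(* Main.v *)
Require Import Defs.
From HB Require Import structures.
From mathcomp Require Import all_boot all_order all_algebra.
From mathcomp Require Import all_classical all_reals all_analysis.
From mathcomp Require Import ring lra.
Set Implicit Arguments. Unset Strict Implicit. Unset Printing Implicit Defensive.
Import Order.TTheory GRing.Theory Num.Theory.
Import numFieldNormedType.Exports.
Local Open Scope classical_set_scope.
Local Open Scope ring_scope.

Section Expo.
Variable R : realType.

Definition msum n (M : 'M[R]_n) := \sum_i \sum_j `|M i j|.

Lemma msum_ge0 n (M : 'M[R]_n) : 0 <= msum M.
Proof. by apply: sumr_ge0 => i _; apply: sumr_ge0. Qed.

Lemma msum_col n (M:'M[R]_n) j : \sum_l `|M l j| <= msum M.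
Proof.
rewrite /msum; apply: ler_sum => l _.
by rewrite (bigD1 j) //= lerDl sumr_ge0.
Qed.

Lemma mpow_bound n (M : 'M[R]_n) k i j : `|(M ^+ k) i j| <= msum M ^+ k.
Proof.
elim: k i j => [|k IH] i j.
  by rewrite expr0 mxE; case: (i == j); rewrite ?normr1 ?normr0.
rewrite exprSr mxE.
apply: le_trans (ler_norm_sum _ _ _) _.
apply: (@le_trans _ _ (\sum_l msum M ^+ k * `|M l j|)).
  by apply: ler_sum => l _; rewrite normrM ler_wpM2r.
by rewrite -mulr_sumr exprSr ler_wpM2l ?exprn_ge0 ?msum_ge0 ?msum_col.
Qed.

Lemma msumZ n (M : 'M[R]_n) s : msum (s *: M) = `|s| * msum M.
Proof.
rewrite /msum mulr_sumr; apply: eq_bigr => i _; rewrite mulr_sumr.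
by apply: eq_bigr => j _; rewrite mxE normrM.
Qed.

Definition eterm n (M : 'M[R]_n) i j := fun k : nat => (M ^+ k) i j / (k`!)%:R.

Lemma eterm_bound n (M : 'M[R]_n) i j k (c : R) : msum M <= c ->
  `|eterm M i j k| <= exp_coeff c k.
Proof.
move=> Mc; rewrite /eterm /exp_coeff /= normrM normfV normr_nat.
rewrite ler_wpM2r ?invr_ge0 ?ler0n //.
apply: le_trans (mpow_bound _ _ _ _) _.
by rewrite lerXn2r ?nnegrE ?msum_ge0 ?(le_trans (msum_ge0 M)).
Qed.

Lemma eterm_ncvg n (M : 'M[R]_n) i j (c : R) : msum M <= c ->
  cvgn [normed series (eterm M i j)].
Proof.
move=> Mc.
apply: (@series_le_cvg _ _ (exp_coeff c)) => //.
- by move=> k; rewrite normr_ge0.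
- by move=> k; rewrite exp_coeff_ge0 // (le_trans (msum_ge0 M)).
- by move=> k; apply: eterm_bound.
- exact: is_cvg_series_exp_coeff.
Qed.

Lemma expmxE n (M : 'M[R]_n) i j : expmx M i j = limn (series (eterm M i j)).
Proof. by rewrite mxE seriesEord. Qed.

Lemma expmx_cvg n (M : 'M[R]_n) i j :
  series (eterm M i j) @ \oo --> expmx M i j.
Proof.
rewrite expmxE.
exact/normed_cvg/(@eterm_ncvg _ _ _ _ (msum M)).
Qed.

Lemma expmx_bound n (M : 'M[R]_n) i j (c : R) : msum M <= c ->
  `|expmx M i j| <= limn (series (exp_coeff c)).
Proof.
move=> Mc; rewrite expmxE.
apply: le_trans (lim_series_norm (@eterm_ncvg n M i j c Mc)) _.
apply: lim_series_le.
- exact: (@eterm_ncvg n M i j c Mc).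
- exact: is_cvg_series_exp_coeff.
- by move=> k; apply: eterm_bound.
Qed.
End Expo.
Section Meas.
Variable R : realType.

Lemma expZ_entry n (M : 'M[R]_n) (s : R) k i j :
  ((s *: M) ^+ k) i j = s ^+ k * (M ^+ k) i j.
Proof.
elim: k i j => [|k IH] i j; first by rewrite !expr0 mul1r.
rewrite !exprSr !mxE mulr_sumr; apply: eq_bigr => l _.
by rewrite IH mxE; ring.
Qed.

Lemma Phi_meas n (A : 'M[R]_n) (t : R) i j (D : set R) :
  measurable_fun D (fun tau => Phi A (t - tau) i j).
Proof.
pose h := fun (N : nat) (tau : R) =>
  \sum_(k < N) ((t - tau) ^+ k * ((A ^+ k) i j / (k`!)%:R)).
have hE N tau : h N tau = series (eterm ((t - tau) *: A) i j) N.
  rewrite seriesEord /= /h; apply: eq_bigr => k _.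
  by rewrite /eterm expZ_entry mulrA.
apply: (@measurable_realfun.measurable_fun_cvg _ _ _ _ h).
- move=> N; apply: measurable_sum => k.
  apply: measurable_realfun.measurable_funM; last exact: measurable_cst.
  apply: measurable_realfun.measurable_funX; apply: measurable_realfun.measurable_funB; first exact: measurable_cst.
  exact: measurable_id.
- move=> tau _.
  have -> : (fun N => h N tau) = series (eterm ((t - tau) *: A) i j).
    by apply/funext => N; rewrite hE.
  exact: expmx_cvg.
Qed.

Lemma Phi_bound n (A : 'M[R]_n) (T s : R) i j : `|s| <= T ->
  `|Phi A s i j| <= limn (series (exp_coeff (T * msum A))).
Proof.
move=> sT; apply: expmx_bound.
by rewrite msumZ ler_wpM2r // msum_ge0.
Qed.

End Meas.
Section Integ.
Variable R : realType.
Lemma mfun_toL (D : set R) (f : R -> R) : measurable_fun D f ->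
  measurable_fun (D : set (measurableTypeR R)) f.
Proof. exact: id. Qed.
Lemma meas_toL (D : set R) : measurable D -> measurable (D : set (measurableTypeR R)).
Proof. exact: id. Qed.

Notation mu := (@lebesgue_measure R).

Lemma bounded_of (f : R -> R) (D : set R) (M : R) :
  (forall y, D y -> `|f y| <= M) -> [bounded f x | x in D].
Proof.
move=> H; rewrite /bounded_near; near=> N => y Dy.
apply: le_trans (H y Dy) _; near: N; apply: nbhs_pinfty_ge.
by rewrite num_real.
Unshelve. all: by end_near. Qed.

Lemma integrable_sumR (D : set R) (I : Type) (s : seq I) (h : I -> R -> R) :
  measurable D ->
  (forall k, mu.-integrable D (EFin \o h k)) ->
  mu.-integrable D (EFin \o (fun x => \sum_(k <- s) h k x)).
Proof.
move=> mD Hh; elim: s => [|k s IH].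
  have -> : EFin \o (fun x => \sum_(k <- [::]) h k x) = cst 0%E.
    by apply/funext => x; rewrite /= big_nil.
  exact: integrable0.
have -> : EFin \o (fun x => \sum_(j <- k :: s) h j x) =
    (EFin \o h k) \+ (EFin \o (fun x => \sum_(j <- s) h j x)).
  by apply/funext => x; rewrite /= big_cons EFinD.
exact: integrableD.
Qed.

Lemma integrableM_bd (D : set R) (g p : R -> R) : measurable D ->
  measurable_fun D g -> [bounded g x | x in D] ->
  mu.-integrable D (EFin \o p) ->
  mu.-integrable D (EFin \o (fun x => g x * p x)).
Proof.
move=> mD mg bg ip.
have -> : EFin \o (fun x => g x * p x) = (fun x => ((g x)%:E * (p x)%:E)%E).
  by apply/funext => x; rewrite /= EFinM.
exact: (integrableMr (meas_toL mD) (mfun_toL mg) bg ip).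
Qed.

Lemma itv_finite (t : R) : (mu `[0%R, t]%classic < +oo)%E.
Proof. rewrite lebesgue_measure_itv /=. case: ifP => _; exact: ltry. Qed.

Lemma itv_sub (t tf : R) : t <= tf -> `[0, t] `<=` `[0, tf].
Proof.
move=> ttf x /=; rewrite !in_itv /= => /andP[h1 h2]; apply/andP; split => //.
exact: le_trans ttf.
Qed.

End Integ.
Section FinBd.
Variable R : realType.
Lemma inf_fin_le (n : nat) (F : 'I_n -> R) k : inf [set F j | j in [set: 'I_n]] <= F k.
Proof.
apply: ge_inf; last by exists k.
exists (- \sum_j `|F j|) => _ [j _ <-]; rewrite lerNl.
apply: (@le_trans _ _ `|F j|); first by rewrite -normrN ler_norm.
by rewrite (bigD1 j) //= lerDl sumr_ge0.
Qed.
Lemma sup_fin_ge (n : nat) (F : 'I_n -> R) k : F k <= sup [set F j | j in [set: 'I_n]].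
Proof.
apply: ub_le_sup; last by exists k.
exists (\sum_j `|F j|) => _ [j _ <-].
apply: (@le_trans _ _ `|F j|); first by rewrite ler_norm.
by rewrite (bigD1 j) //= lerDl sumr_ge0.
Qed.
End FinBd.
Unset Implicit Arguments.
Set Strict Implicit.

Theorem theorem4 (R : realType) (Nx Nd Np : nat) (tf : R)
  (A : 'M[R]_Nx) (Bp : 'M[R]_(Nx, Np)) (Bd : 'M[R]_(Nx, Nd))
  (x0 : 'cV[R]_Nx) (d : R -> 'cV[R]_Nd)
  (pmin pmax : 'cV[R]_Np) (xmin xmax : 'cV[R]_Nx)
  (delta : R -> 'cV[R]_Np) (pplus_tot pminus_tot pa_tot : R -> R) :
  (* A Metzler, Bp >= 0 *)
  (forall i, A i i <= 0) ->
  (forall i j, i != j -> 0 <= A i j) ->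
  (forall i j, 0 <= Bp i j) ->
  (* bounds *)
  (forall j, 0 <= pmin j 0 <= pmax j 0) ->
  (forall i, xmin i 0 <= xmax i 0) ->
  (* regularity of the given signals on T = [0, tf] *)
  (forall k, measurable_fun `[0, tf] (fun t => d t k 0)) ->
  (forall k, lebesgue_measure.-integrable `[0, tf] (fun t => (d t k 0)%:E)) ->
  (forall j, measurable_fun `[0, tf] (fun t => delta t j 0)) ->
  (* dispatch plan *)
  (forall t, t \in `[0, tf] -> forall j, 0 <= delta t j 0) ->
  (forall t, t \in `[0, tf] -> \sum_j delta t j 0 = 1) ->
  (* positivity of gamma_{+/-} *)
  (forall t, t \in `[0, tf] -> forall i,
     0 < gamma_plus A Bp delta t i /\ 0 < gamma_minus A Bp delta t i) ->
  (* p_+ feasible, dispatched by delta *)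
  measurable_fun `[0, tf] pplus_tot ->
  (forall t, t \in `[0, tf] -> 0 <= pplus_tot t) ->
  (forall t, t \in `[0, tf] -> forall j,
     pmin j 0 <= dispatch delta pplus_tot t j 0 <= pmax j 0) ->
  (forall t, t \in `[0, tf] -> forall i,
     xmin i 0 <= state A Bd Bp x0 d (dispatch delta pplus_tot) t i <= xmax i 0) ->
  (* p_- feasible, dispatched by delta *)
  measurable_fun `[0, tf] pminus_tot ->
  (forall t, t \in `[0, tf] -> 0 <= pminus_tot t) ->
  (forall t, t \in `[0, tf] -> forall j,
     pmin j 0 <= dispatch delta pminus_tot t j 0 <= pmax j 0) ->
  (forall t, t \in `[0, tf] -> forall i,
     xmin i 0 <= state A Bd Bp x0 d (dispatch delta pminus_tot) t i <= xmax i 0) ->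
  (* the candidate p_a *)
  measurable_fun `[0, tf] pa_tot ->
  (forall t, t \in `[0, tf] -> 0 <= pa_tot t) ->
  (forall t, t \in `[0, tf] -> forall j,
     pmin j 0 <= dispatch delta pa_tot t j 0 <= pmax j 0) ->
  (forall t, t \in `[0, tf] ->
     E_down A Bp delta (dispatch delta pminus_tot) t <= int0 pa_tot t
       <= E_up A Bp delta (dispatch delta pplus_tot) t) ->
  forall t, t \in `[0, tf] -> forall i,
    xmin i 0 <= state A Bd Bp x0 d (dispatch delta pa_tot) t i <= xmax i 0.
Proof.
move=> Adiag Aoff Bp0 pb xb md id mdelta d0 d1 gpos mpp pp0 ppb ppx mpm pm0 pmb pmx mpa pa0 pab Ebd t tin i.
have [t0 ttf] : (0 <= t) /\ (t <= tf) by move: tin; rewrite in_itv /= => /andP[].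
pose D : set R := `[0%R, t]%classic.
have mD : measurable D by exact: measurable_itv.
have DTs : D `<=` `[0%R, tf]%classic by exact: itv_sub.
have [gp gm] := gpos t tin i.
pose g tau := gdisp A Bp delta t tau i.
have gbd : forall tau, D tau ->
    gamma_minus A Bp delta t i <= g tau <= gamma_plus A Bp delta t i.
  move=> tau Dtau; apply/andP; split.
  - have hi : has_inf [set gdisp A Bp delta t tau0 i | tau0 in `[0, t]].
      apply: contrapT => nh; move: gm; rewrite /gamma_minus inf_out //.
      by rewrite ltxx.
    by case: hi => _ hl; apply: (ge_inf hl); exists tau.
  - have hs : has_sup [set gdisp A Bp delta t tau0 i | tau0 in `[0, t]].
      apply: contrapT => nh; move: gp; rewrite /gamma_plus sup_out //.
      by rewrite ltxx.
    by case: hs => _ hu; apply: (ub_le_sup hu); exists tau.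
have mPhiB : forall (m : nat) (B : 'M[R]_(Nx, m)) l j,
    measurable_fun D (fun tau => (Phi A (t - tau) *m B) l j).
  move=> m B l j.
  have -> : (fun tau => (Phi A (t - tau) *m B) l j) =
      (fun tau => \sum_k Phi A (t - tau) l k * B k j).
    by apply/funext => tau; rewrite mxE.
  apply: measurable_sum => k; apply: measurable_realfun.measurable_funM.
    exact: Phi_meas.
  exact: measurable_cst.
have mg : measurable_fun D g.
  rewrite /g /gdisp; apply: measurable_sum => j.
  apply: measurable_realfun.measurable_funM; first exact: mPhiB.
  exact: measurable_funS (mdelta j).
have bg : [bounded g x | x in D].
  apply: (@bounded_of _ _ _ (gamma_plus A Bp delta t i)) => y Dy.
  have /andP[h1 h2] := gbd y Dy.
  by rewrite ger0_norm // (le_trans (ltW gm) h1).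
have pbound : forall p : R -> R, (forall s, s \in `[0, tf] -> 0 <= p s) ->
   (forall s, s \in `[0, tf] -> forall j,
      pmin j 0 <= dispatch delta p s j 0 <= pmax j 0) ->
   forall s, s \in `[0, tf] -> `|p s| <= \sum_j pmax j 0.
  move=> p p0 pb' s sin; rewrite ger0_norm ?p0 //.
  rewrite -[p s]mulr1 -(d1 s sin) mulr_sumr; apply: ler_sum => j _.
  by have /andP[_] := pb' s sin j; rewrite /dispatch mxE.
have pint : forall p : R -> R, measurable_fun `[0, tf] p ->
   (forall s, s \in `[0, tf] -> 0 <= p s) ->
   (forall s, s \in `[0, tf] -> forall j,
      pmin j 0 <= dispatch delta p s j 0 <= pmax j 0) ->
   lebesgue_measure.-integrable D (EFin \o p).
  move=> p mp p0 pb'; apply: measurable_bounded_integrable.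
  - exact: mD.
  - exact: itv_finite.
  - exact: (mfun_toL (measurable_funS _ DTs mp)).
  - apply: (@bounded_of _ _ _ (\sum_j pmax j 0)) => y Dy.
    exact: pbound p p0 pb' y (DTs y Dy).
have gpint : forall p : R -> R, measurable_fun `[0, tf] p ->
   (forall s, s \in `[0, tf] -> 0 <= p s) ->
   (forall s, s \in `[0, tf] -> forall j,
      pmin j 0 <= dispatch delta p s j 0 <= pmax j 0) ->
   lebesgue_measure.-integrable D (EFin \o (fun x => g x * p x)).
  move=> p mp p0 pb'; exact: integrableM_bd mD mg bg (pint p mp p0 pb').
pose dd tau := (Phi A (t - tau) *m (Bd *m d tau)) i 0.
have ddint : lebesgue_measure.-integrable D (EFin \o dd).
  have -> : dd = (fun tau => \sum_l \sum_k
                    (Phi A (t - tau) i l * Bd l k) * d tau k 0).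
    apply/funext => tau; rewrite /dd [(Phi A _ *m _) i 0]mxE; apply: eq_bigr => l _.
    rewrite [(Bd *m d tau) l 0]mxE mulr_sumr; apply: eq_bigr => k _; by rewrite mulrA.
  apply: integrable_sumR => // l; apply: integrable_sumR => // k.
  apply: integrableM_bd => //.
  - apply: measurable_realfun.measurable_funM; first exact: Phi_meas.
    exact: measurable_cst.
  - apply: (@bounded_of _ _ _
        (limn (series (exp_coeff (t * msum A))) * `|Bd l k|)) => y Dy.
    rewrite normrM ler_wpM2r //; apply: Phi_bound.
    move: Dy; rewrite /D /= in_itv /= => /andP[y0 yt].
    by rewrite ger0_norm ?subr_ge0 // lerBlDr lerDl.
  - exact: (integrableS (meas_toL (measurable_itv _)) (meas_toL mD) DTs (id k)).
have stE : forall p : R -> R,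
    state A Bd Bp x0 d (dispatch delta p) t i =
    (Phi A t *m x0) i 0 + int0 (fun tau => dd tau + g tau * p tau) t.
  move=> p; rewrite /state; congr (_ + _); rewrite /int0.
  apply: eq_Rintegral => tau _.
  rewrite mulmxDr [LHS]mxE /dd; congr (_ + _).
  rewrite mulmxA [LHS]mxE /g /gdisp mulr_suml.
  apply: eq_bigr => j _; rewrite /dispatch [X in _ * X = _]mxE; ring.
have prE : forall p : R -> R,
    pow_resp A Bp (dispatch delta p) t i = int0 (fun tau => g tau * p tau) t.
  move=> p; rewrite /pow_resp /int0; apply: eq_Rintegral => tau _.
  rewrite [LHS]mxE /g /gdisp mulr_suml.
  apply: eq_bigr => j _; rewrite /dispatch [X in _ * X = _]mxE; ring.
have splitE : forall p : R -> R, measurable_fun `[0, tf] p ->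
   (forall s, s \in `[0, tf] -> 0 <= p s) ->
   (forall s, s \in `[0, tf] -> forall j,
      pmin j 0 <= dispatch delta p s j 0 <= pmax j 0) ->
   state A Bd Bp x0 d (dispatch delta p) t i =
   (Phi A t *m x0) i 0 + (int0 dd t + int0 (fun tau => g tau * p tau) t).
  move=> p mp p0 pb'; rewrite stE /int0 RintegralD //.
  exact: gpint.
set gP := gamma_plus A Bp delta t i.
set gM := gamma_minus A Bp delta t i.
have Ipa := pint pa_tot mpa pa0 pab.
have cint : forall c : R,
    lebesgue_measure.-integrable D (EFin \o (fun x => c * pa_tot x)).
  move=> c; apply: (@integrableM_bd _ D (fun _ => c) pa_tot) => //.
  by apply: (@bounded_of _ _ _ `|c|) => y _.
have [Edn Eup] := andP (Ebd t tin).
have up : int0 (fun tau => g tau * pa_tot tau) t <=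
          int0 (fun tau => g tau * pplus_tot tau) t.
  apply: (@le_trans _ _ (int0 (fun tau => gP * pa_tot tau) t)).
    apply: le_Rintegral => //; first exact: gpint.
    move=> x Dx; apply: ler_wpM2r; first exact: pa0 (DTs x Dx).
    by have /andP[] := gbd x Dx.
  rewrite -(prE pplus_tot) /int0 RintegralZl // -/(int0 pa_tot t).
  apply: (@le_trans _ _ (gP * E_up A Bp delta (dispatch delta pplus_tot) t)).
    by rewrite ler_wpM2l // ltW.
  apply: (@le_trans _ _ (gP * (gP^-1 * pow_resp A Bp (dispatch delta pplus_tot) t i))).
    apply: ler_wpM2l; first exact: ltW.
    rewrite /E_up /gP; exact: (inf_fin_le (fun k => (gamma_plus A Bp delta t k)^-1 *
                          pow_resp A Bp (dispatch delta pplus_tot) t k) i).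
  by rewrite mulrA mulfV ?mul1r // gt_eqF.
have dn : int0 (fun tau => g tau * pminus_tot tau) t <=
          int0 (fun tau => g tau * pa_tot tau) t.
  apply: (@le_trans _ _ (int0 (fun tau => gM * pa_tot tau) t)); last first.
    apply: le_Rintegral => //; first exact: gpint.
    move=> x Dx; apply: ler_wpM2r; first exact: pa0 (DTs x Dx).
    by have /andP[] := gbd x Dx.
  rewrite -(prE pminus_tot) [X in _ <= X]/int0 RintegralZl // -/(int0 pa_tot t).
  apply: (@le_trans _ _ (gM * E_down A Bp delta (dispatch delta pminus_tot) t)); last first.
    by rewrite ler_wpM2l // ltW.
  apply: (@le_trans _ _ (gM * (gM^-1 * pow_resp A Bp (dispatch delta pminus_tot) t i))).
    by rewrite mulrA mulfV ?mul1r // gt_eqF.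
  apply: ler_wpM2l; first exact: ltW.
  rewrite /E_down /gM; exact: (sup_fin_ge (fun k => (gamma_minus A Bp delta t k)^-1 *
                          pow_resp A Bp (dispatch delta pminus_tot) t k) i).
have := pmx t tin i; have := ppx t tin i.
rewrite !splitE //.
move=> /andP[_ h1] /andP[h2 _]; apply/andP; split.
  by apply: le_trans h2 _; rewrite lerD2l lerD2l.
by apply: le_trans h1; rewrite lerD2l lerD2l.
Qed.
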